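(* Let $K,T\subset\mathbb{R}^n$ be convex bodies with $T$ strictly convex and smooth. Let $q=(q_1,\dots,q_m)$ be a closed $(K,T)$-Minkowski billiard trajectory with closed dual billiard trajectory $p=(p_1,\dots,p_m)$ in $T$. Then $p$ is a closed polygonal curve (satisfying $p_j\neq p_{j+1}$ and $p_j\notin[p_{j-1},p_{j+1}]$ for all $j$) and is a closed $(T,-K)$-Minkowski billiard trajectory having $-q^{+1}:=(-q_2,\dots,-q_m,-q_1)$ as a closed dual billiard trajectory on $-K$.
   Context: A convex body is a compact convex set in $\mathbb{R}^n$ containing the origin in its interior; it is smooth if through each boundary point there is a unique supporting hyperplane. For a convex set $C$ and $z\in\partial C$, $N_C(z)=\{v:\langle v,y-z\rangle\le 0\ \forall y\in C\}$. A closed polygonal curve $(q_1,\dots,q_m)$, $m\ge2$, always satisfies $q_j\ne q_{j+1}$ and $q_j\notin[q_{j-1},q_{j+1}]$ (indices mod $m$). For convex bodies $A,B$, a closed polygonal curve $q$ with vertices on $\partial A$ is a closed $(A,B)$-Minkowski billiard trajectory if there are $p_1,\dots,p_m\in\partial B$ with $q_{j+1}-q_j\in N_B(p_j)$ and $p_{j+1}-p_j\in -N_A(q_{j+1})$ for all $j$; $p=(p_1,\dots,p_m)$ is called a closed dual billiard trajectory in $B$. *)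

(* Defs.v *)
From HB Require Import structures.
From mathcomp Require Import all_boot all_order all_algebra.
From mathcomp Require Import all_classical all_reals all_analysis.
Set Implicit Arguments. Unset Strict Implicit. Unset Printing Implicit Defensive.
Import Order.TTheory GRing.Theory Num.Theory.
Import numFieldNormedType.Exports.
Local Open Scope classical_set_scope.
Local Open Scope ring_scope.

Section Defs.
Variables (R : realType) (n : nat).
Notation vec := 'rV[R]_n.

Definition dotv (u v : vec) : R := (u *m v^T) 0 0.

Definition convex_set (C : set vec) : Prop :=
  forall x y t, C x -> C y -> 0 <= t <= 1 -> C (t *: x + (1 - t) *: y).

Definition convex_body (C : set vec) : Prop :=
  [/\ compact C, convex_set C & (interior C) 0].

Definition bdry (C : set vec) : set vec := closure C `\` interior C.

Definition normal_cone (C : set vec) (z : vec) : set vec :=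
  [set v | forall y, C y -> dotv v (y - z) <= 0].

Definition supporting_hyperplane (C : set vec) (z : vec) (H : set vec) : Prop :=
  exists2 v, (v != 0) /\ normal_cone C z v & H = [set x | dotv v x = dotv v z].

Definition smooth (C : set vec) : Prop :=
  forall z, bdry C z ->
    (exists H, supporting_hyperplane C z H) /\
    (forall H1 H2, supporting_hyperplane C z H1 -> supporting_hyperplane C z H2 -> H1 = H2).

Definition strictly_convex (C : set vec) : Prop :=
  forall x y t, C x -> C y -> x != y -> 0 < t < 1 ->
    (interior C) (t *: x + (1 - t) *: y).

Definition segment (a b : vec) : set vec :=
  [set x | exists2 t : R, 0 <= t <= 1 & x = (1 - t) *: a + t *: b].

Definition neg_set (C : set vec) : set vec := [set x | C (- x)].

(* closed polygonal curve (q_1,...,q_m), m >= 2, indices mod m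
   (ordS / ord_pred are the cyclic successor / predecessor on 'I_m) *)
Definition closed_polygonal (m : nat) (q : 'I_m -> vec) : Prop :=
  (2 <= m)%N /\
  forall j : 'I_m, q j != q (ordS j) /\ ~ segment (q (ord_pred j)) (q (ordS j)) (q j).

Definition dual_billiard_traj (A B : set vec) (m : nat) (q p : 'I_m -> vec) : Prop :=
  forall j : 'I_m,
    [/\ bdry B (p j),
        normal_cone B (p j) (q (ordS j) - q j) &
        normal_cone A (q (ordS j)) (- (p (ordS j) - p j))].

Definition minkowski_billiard (A B : set vec) (m : nat) (q : 'I_m -> vec) : Prop :=
  [/\ closed_polygonal q,
      forall j, bdry A (q j) &
      exists p, dual_billiard_traj A B q p].

End Defs.

(* Main.v *)
Require Import Defs.
From HB Require Import structures.
From mathcomp Require Import all_boot all_order all_algebra.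
From mathcomp Require Import all_classical all_reals all_analysis.
From mathcomp Require Import ring.
Import Order.TTheory GRing.Theory Num.Theory.
Import numFieldNormedType.Exports.
Local Open Scope classical_set_scope.
Local Open Scope ring_scope.
Section S.
Variables (R : realType) (n : nat).
Implicit Types u v w : 'rV[R]_n.
Lemma dotvE u v : dotv u v = \sum_i u 0 i * v 0 i.
Proof. by rewrite /dotv mxE; apply: eq_bigr => i _; rewrite mxE. Qed.
Lemma dotvC u v : dotv u v = dotv v u.
Proof. by rewrite !dotvE; apply: eq_bigr => i _; rewrite mulrC. Qed.
Lemma dotvDr u v w : dotv u (v + w) = dotv u v + dotv u w.
Proof. by rewrite !dotvE -big_split; apply: eq_bigr => i _; rewrite mxE mulrDr. Qed.
Lemma dotvZr u a v : dotv u (a *: v) = a * dotv u v.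
Proof. by rewrite !dotvE mulr_sumr; apply: eq_bigr => i _; rewrite mxE mulrCA. Qed.
Lemma dotvNr u v : dotv u (- v) = - dotv u v.
Proof. by rewrite -scaleN1r dotvZr mulN1r. Qed.
Lemma dotvBr u v w : dotv u (v - w) = dotv u v - dotv u w.
Proof. by rewrite dotvDr dotvNr. Qed.
Lemma dotvDl u v w : dotv (v + w) u = dotv v u + dotv w u.
Proof. by rewrite dotvC dotvDr !(dotvC u). Qed.
Lemma dotvZl u a v : dotv (a *: v) u = a * dotv v u.
Proof. by rewrite dotvC dotvZr dotvC. Qed.
Lemma dotvNl u v : dotv (- v) u = - dotv v u.
Proof. by rewrite dotvC dotvNr dotvC. Qed.
Lemma dotvBl u v w : dotv (v - w) u = dotv v u - dotv w u.
Proof. by rewrite dotvDl dotvNl. Qed.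
Lemma dotv0r u : dotv u 0 = 0.
Proof. by rewrite -(scale0r (0 : 'rV[R]_n)) dotvZr mul0r. Qed.
Lemma dotvv_eq0 u : dotv u u = 0 -> u = 0.
Proof.
rewrite dotvE => /eqP; rewrite psumr_eq0; last by move=> i _; rewrite -expr2 sqr_ge0.
move=> /allP h; apply/rowP => i; rewrite mxE.
have := h i (mem_index_enum i); rewrite implyTb mulf_eq0 orbb.
by move/eqP.
Qed.
Lemma small_scale (C : set 'rV[R]_n) v : interior C 0 -> exists2 e : R, 0 < e & C (e *: v).
Proof.
rewrite /interior /= => h.
have := @scalel_continuous R 'rV[R]_n v 0.
move=> /(_ C); rewrite scale0r => /(_ h) /nbhs_ballP [e e0 he].
exists (e / 2); first by rewrite divr_gt0.
apply: he; rewrite /ball /= sub0r normrN gtr0_norm ?divr_gt0 //.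
by rewrite ltr_pdivrMr // ltr_pMr // ltr1n.
Qed.
Lemma normal_ray (C : set 'rV[R]_n) z v w : smooth C -> interior C 0 -> bdry C z ->
  v != 0 -> w != 0 -> normal_cone C z v -> normal_cone C z w ->
  exists2 c : R, 0 < c & w = c *: v.
Proof.
move=> hs hi hz v0 w0 nv nw.
have [_ uq] := hs z hz.
have E := uq _ _ (ex_intro2 _ _ v (conj v0 nv) erefl) (ex_intro2 _ _ w (conj w0 nw) erefl).
set u := dotv v v *: w - dotv v w *: v.
have hv : dotv v u = 0.
  by rewrite /u dotvBr !dotvZr (dotvC v w) mulrC subrr.
have hw : dotv w u = 0.
  have : [set x | dotv v x = dotv v z] (z + u) by rewrite /= dotvDr hv addr0.
  rewrite E /= dotvDr => /eqP; rewrite -subr_eq0 addrC addKr => /eqP //.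
have u0 : u = 0.
  apply: dotvv_eq0; rewrite {1}/u dotvBl !dotvZl hv hw.
  by rewrite !mulr0 subrr.
have vv : dotv v v != 0 by apply: contra v0 => /eqP /dotvv_eq0 ->.
have wE : w = (dotv v w / dotv v v) *: v.
  move/eqP: u0; rewrite /u subr_eq0 => /eqP h.
  by rewrite mulrC -scalerA -h scalerA mulVf // scale1r.
exists (dotv v w / dotv v v) => //.
set c := dotv v w / dotv v v in wE *.
have c0 : c != 0 by apply: contra w0 => /eqP c0; rewrite wE c0 scale0r.
rewrite lt_neqAle eq_sym c0 /=; rewrite leNgt; apply/negP => cneg.
have [e e0 he] := @small_scale C v hi.
have C0 : C 0 by apply: nbhs_singleton hi.
have key y : C y -> dotv v (y - z) = 0.
  move=> Cy; apply/eqP; rewrite eq_le nv //=.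
  by have := nw y Cy; rewrite wE dotvZl nmulr_rle0.
have := key _ C0; rewrite sub0r dotvNr => /eqP; rewrite oppr_eq0 => /eqP dz.
have := key _ he; rewrite dotvBr dz subr0 dotvZr => /eqP; rewrite mulf_eq0.
by rewrite (negbTE vv) orbF gt_eqF.
Qed.
Lemma interior_neg (C : set 'rV[R]_n) x : interior C x -> interior (neg_set C) (-x).
Proof.
rewrite /interior /= => h.
have := @oppr_continuous R 'rV[R]_n (-x).
by move=> /(_ C); rewrite opprK => /(_ h).
Qed.
Lemma neg_negK (C : set 'rV[R]_n) : neg_set (neg_set C) = C.
Proof. by apply/funext => y; rewrite /neg_set /= opprK. Qed.
Lemma bdry_neg (C : set 'rV[R]_n) x : closed C -> bdry C x -> bdry (neg_set C) (- x).
Proof.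
move=> cC [cx nix]; split.
  apply: subset_closure; rewrite /neg_set /= opprK.
  by move: cx; rewrite -(closure_id C).1.
by move=> /interior_neg; rewrite neg_negK opprK.
Qed.
End S.

Theorem proposition3p5 (R : realType) (n : nat) (K T : set 'rV[R]_n)
  (m : nat) (q p : 'I_m -> 'rV[R]_n) :
  convex_body K -> convex_body T -> strictly_convex T -> smooth T ->
  minkowski_billiard K T q -> dual_billiard_traj K T q p ->
  [/\ closed_polygonal p,
      minkowski_billiard T (neg_set K) p &
      dual_billiard_traj T (neg_set K) p (fun j => - q (ordS j))].
Proof.
move=> [cK _ iK] [cT _ iT] hsc hsm [[m2 qpoly] qbd _] hp.
have clK : closed K by apply: compact_closed => //; apply: norm_hausdorff.
have clT : closed T by apply: compact_closed => //; apply: norm_hausdorff.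
have inT x : bdry T x -> T x.
  by move=> [cx _]; move: cx; rewrite -(closure_id T).1.
have stepA j : p j != p (ordS j).
  apply/negP => /eqP eqp.
  set k := ordS j.
  have [bj nj _] := hp j.
  have [_ nk _] := hp k.
  rewrite -/k -eqp in nk.
  have [qjk _] := qpoly j.
  have [qk seg] := qpoly k.
  have v0 : q k - q j != 0 by rewrite subr_eq0 eq_sym.
  have w0 : q (ordS k) - q k != 0 by rewrite subr_eq0 eq_sym.
  have [c c0 wE] := @normal_ray _ _ _ _ _ _ hsm iT bj v0 w0 nj nk.
  apply: seg; rewrite /k ordSK.
  have c1 : 1 + c != 0 by rewrite gt_eqF // ltr_wpDr // ltW.
  exists (1 + c)^-1.
    have c1p : 0 < 1 + c by rewrite ltr_wpDr // ltW.
    rewrite invr_ge0 ltW //= invf_le1 //.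
    by rewrite lerDl ltW.
  move/eqP: wE; rewrite subr_eq => /eqP ->.
  apply/rowP => i; rewrite !mxE; field; done.
have cp : closed_polygonal p.
  split => // j; split; first exact: stepA.
    move=> [t /andP [t0 t1] pj].
    have [bj _ _] := hp j.
    have [_ nij] := bj.
    have [Ha Hb] : T (p (ord_pred j)) /\ T (p (ordS j)).
      by split; apply: inT; have [] := hp (ord_pred j); have [] := hp (ordS j).
    have tpos : 0 < t.
      rewrite lt_neqAle t0 andbT; apply/negP => /eqP te.
      have := stepA (ord_pred j); rewrite ord_predK pj -te subr0 scale1r scale0r addr0.
      by rewrite eqxx.
    have tlt1 : t < 1.
      rewrite lt_neqAle t1 andbT; apply/negP => /eqP te1.
      by have := stepA j; rewrite pj te1 subrr scale0r add0r scale1r eqxx.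
    have [eab|nab] := eqVneq (p (ord_pred j)) (p (ordS j)).
      have := stepA j; rewrite pj eab -scalerDl subrK scale1r eqxx //.
    apply: nij; rewrite pj addrC.
    have := hsc _ _ t Hb Ha; rewrite eq_sym => /(_ nab); apply.
    by rewrite tpos tlt1.
have hd : dual_billiard_traj T (neg_set K) p (fun j => - q (ordS j)).
  move=> j; split.
  - by apply: bdry_neg.
  - move=> y Ky; have [_ _ h] := hp j.
    have := h _ Ky; rewrite opprK.
    by rewrite -opprD dotvNr dotvNl opprK.
  - have [_ h _] := hp (ordS j).
    by rewrite opprK opprD opprK.
split => //; split => //.
  by move=> j; have [] := hp j.
by exists (fun j => - q (ordS j)).
Qed.
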